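(* Let $\mathcal{E}_1=[\theta_1,u_1]$, $\mathcal{E}_2=[\theta_2,u_2]$ be interval effect algebras with order-determining sets of states. Let $\Omega$ be a finite set, $n\ge1$, and for $i=1,\dots,n$ let $A_i=\{A_{ix}:x\in\Omega\}$ be an observable on $\mathcal{E}_1$, $\beta_{ix}\in\mathcal{S}(\mathcal{E}_2)$ for $x\in\Omega$, and $\lambda_i\in[0,1]$ with $\sum_i\lambda_i=1$. Define, for $x\in\Omega$ and $\alpha\in\mathcal{S}(\mathcal{E}_1)$, $\mathcal{I}_x(\alpha)=\sum_i\lambda_i\alpha(A_{ix})\beta_{ix}$. Then: (i) $\mathcal{I}=\{\mathcal{I}_x:x\in\Omega\}$ is an instrument from $\mathcal{E}_1$ to $\mathcal{E}_2$; (ii) for $\alpha\in\mathcal{S}(\mathcal{E}_1)$, setting $\alpha_i=\sum_x\alpha(A_{ix})\beta_{ix}$, we have $\alpha_i\in\mathcal{S}(\mathcal{E}_2)$ and $\overline{\mathcal{I}}(\alpha)=\sum_x\mathcal{I}_x(\alpha)=\sum_i\lambda_i\alpha_i\in\mathcal{S}(\mathcal{E}_2)$; (iii) $\widehat{\mathcal{I}}=\sum_i\lambda_iA_i$, i.e. for each $x\in\Omega$, $\sum_i\lambda_iA_{ix}\in\mathcal{E}_1$ and $\alpha(\sum_i\lambda_iA_{ix})=\mathcal{I}_x(\alpha)(u_2)$ for all $\alpha\in\mathcal{S}(\mathcal{E}_1)$.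
   Context: Let $V$ be a real vector space with zero $\theta$ and $K\subseteq V$ a positive cone ($\mathbb{R}^+K\subseteq K$, $K+K\subseteq K$, $K\cap(-K)=\{\theta\}$), ordered by $x\le y$ iff $y-x\in K$. For $u\in K$, $u\neq\theta$, the interval effect algebra is $\mathcal{E}=[\theta,u]=\{x\in K:x\le u\}$; $a\perp b$ means $a+b\le u$. A state is $s\colon\mathcal{E}\to[0,1]$ with $s(u)=1$ and $s(a+b)=s(a)+s(b)$ when $a\perp b$; $\mathcal{S}(\mathcal{E})$ is the set of all states, assumed order-determining ($a\le b$ iff $s(a)\le s(b)$ for all states $s$). Affine = preserves finite convex combinations. A substate is $\lambda s$, $\lambda\in[0,1]$, $s$ a state. An operation from $\mathcal{E}_1$ to $\mathcal{E}_2$ is an affine map from $\mathcal{S}(\mathcal{E}_1)$ to substates on $\mathcal{E}_2$; a channel is an operation with values in $\mathcal{S}(\mathcal{E}_2)$. An observable on $\mathcal{E}$ is a finite family $\{A_x:x\in\Omega\}\subseteq\mathcal{E}$ with $\sum_xA_x=u$. An instrument from $\mathcal{E}_1$ to $\mathcal{E}_2$ is a finite family $\{\mathcal{I}_x\}$ of operations whose pointwise sum $\overline{\mathcal{I}}=\sum_x\mathcal{I}_x$ is a channel; $\widehat{\mathcal{I}}_x$ denotes the (unique, by order-determination) effect in $\mathcal{E}_1$ with $\alpha(\widehat{\mathcal{I}}_x)=\mathcal{I}_x(\alpha)(u_2)$ for all $\alpha\in\mathcal{S}(\mathcal{E}_1)$, and $\widehat{\mathcal{I}}=\{\widehat{\mathcal{I}}_x\}$.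 (The instrument $\mathcal{I}$ in the claim is called a mixed Holevo instrument.) *)

(* Defs.v *)
From HB Require Import structures.
From mathcomp Require Import all_boot all_order all_algebra.
From mathcomp Require Import reals.
Set Implicit Arguments. Unset Strict Implicit. Unset Printing Implicit Defensive.
Import Order.TTheory GRing.Theory Num.Theory.
Local Open Scope ring_scope.

Section Defs.
Variables (R : realType) (V : lmodType R).

Definition is_pos_cone (K : V -> Prop) : Prop :=
  [/\ (forall (r : R) x, 0 <= r -> K x -> K (r *: x)),
      (forall x y, K x -> K y -> K (x + y)) &
      (forall x, K x -> K (- x) -> x = 0)].

Definition cle (K : V -> Prop) (x y : V) : Prop := K (y - x).

Definition effect (K : V -> Prop) (u : V) (x : V) : Prop := K x /\ cle K x u.

(* a state on [theta,u]; represented by a function on V whose values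
   outside [theta,u] are irrelevant *)
Definition is_state (K : V -> Prop) (u : V) (s : V -> R) : Prop :=
  [/\ (forall a, effect K u a -> 0 <= s a <= 1),
      s u = 1 &
      (forall a b, effect K u a -> effect K u b -> cle K (a + b) u ->
         s (a + b) = s a + s b)].

(* two functions represent the same state/substate: agree on [theta,u] *)
Definition eq_on_E (K : V -> Prop) (u : V) (f g : V -> R) : Prop :=
  forall a, effect K u a -> f a = g a.

Definition is_substate (K : V -> Prop) (u : V) (f : V -> R) : Prop :=
  exists (l : R) (s : V -> R), [/\ 0 <= l <= 1, is_state K u s &
     eq_on_E K u f (fun a => l * s a)].

Definition order_determining (K : V -> Prop) (u : V) : Prop :=
  forall a b, effect K u a -> effect K u b ->
    (cle K a b <-> (forall s, is_state K u s -> s a <= s b)).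

Definition is_observable (Omega : finType) (K : V -> Prop) (u : V)
  (A : Omega -> V) : Prop :=
  (forall x, effect K u (A x)) /\ \sum_(x : Omega) A x = u.
End Defs.

Section Ops.
Variables (R : realType) (V1 V2 : lmodType R).
Variables (K1 : V1 -> Prop) (u1 : V1) (K2 : V2 -> Prop) (u2 : V2).

Definition is_operation (I : (V1 -> R) -> (V2 -> R)) : Prop :=
  [/\ (forall al, is_state K1 u1 al -> is_substate K2 u2 (I al)),
      (forall al al', is_state K1 u1 al -> is_state K1 u1 al' ->
          eq_on_E K1 u1 al al' -> eq_on_E K2 u2 (I al) (I al')) &
      (forall (m : nat) (w : 'I_m -> R) (s : 'I_m -> V1 -> R),
          (forall j, 0 <= w j) -> \sum_j w j = 1 ->
          (forall j, is_state K1 u1 (s j)) ->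
          eq_on_E K2 u2 (I (fun a => \sum_j w j * s j a))
                        (fun b => \sum_j w j * I (s j) b))].

Definition is_channel (I : (V1 -> R) -> (V2 -> R)) : Prop :=
  is_operation I /\ (forall al, is_state K1 u1 al -> is_state K2 u2 (I al)).

Definition is_instrument (Omega : finType)
  (I : Omega -> (V1 -> R) -> (V2 -> R)) : Prop :=
  (forall x, is_operation (I x)) /\
  is_channel (fun al b => \sum_(x : Omega) I x al b).
End Ops.

(* Main.v *)
Require Import Defs.
From HB Require Import structures.
From mathcomp Require Import all_boot all_order all_algebra.
From mathcomp Require Import reals.
From mathcomp Require Import ring lra.
Import Order.TTheory GRing.Theory Num.Theory.
Set Implicit Arguments. Unset Strict Implicit. Unset Printing Implicit Defensive.
Local Open Scope ring_scope.

Section Help.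
Variables (R : realType) (V : lmodType R) (K : V -> Prop) (u : V).
Hypothesis hK : is_pos_cone K.
Hypothesis huK : K u.

Lemma KZ r x : 0 <= r -> K x -> K (r *: x).
Proof. by case: hK => hs _ _; apply: hs. Qed.

Lemma K0 : K 0.
Proof. have := @KZ 0 u (lexx 0) huK. by rewrite scale0r. Qed.

Lemma KD x y : K x -> K y -> K (x + y).
Proof. by case: hK => _ hd _; apply: hd. Qed.

Lemma Ksum (I : Type) (r : seq I) (P : pred I) (e : I -> V) :
  (forall j, P j -> K (e j)) -> K (\sum_(j <- r | P j) e j).
Proof.
move=> he; elim/big_ind: _ => //; [exact: K0| exact: KD].
Qed.

Lemma eff0 : effect K u 0.
Proof. by split; [exact: K0 | rewrite /cle subr0]. Qed.

Lemma state0 (s : V -> R) : is_state K u s -> s 0 = 0.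
Proof.
move=> [h01 h1 hadd].
have := hadd 0 0 eff0 eff0; rewrite addr0 /cle subr0 => /(_ huK) H.
have : s 0 + s 0 - s 0 = s 0 - s 0 by rewrite -H.
by rewrite addrK subrr.
Qed.

Lemma state_sum (s : V -> R) (I : Type) (r : seq I) (e : I -> V) :
  is_state K u s -> (forall j, K (e j)) -> cle K (\sum_(j <- r) e j) u ->
  s (\sum_(j <- r) e j) = \sum_(j <- r) s (e j).
Proof.
move=> hs he; elim: r => [|x r IH].
  by rewrite !big_nil (state0 hs).
rewrite !big_cons /cle => hc.
have [_ _ hadd] := hs.
have Kr : K (\sum_(j <- r) e j) by apply: Ksum.
have c1 : cle K (e x) u.
  by rewrite /cle (_ : u - e x = (u - (e x + \sum_(j <- r) e j)) + \sum_(j <- r) e j);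
   [apply: KD | rewrite opprD addrA subrK].
have c2 : cle K (\sum_(j <- r) e j) u.
  by rewrite /cle (_ : u - _ = (u - (e x + \sum_(j <- r) e j)) + e x);
   [apply: KD | rewrite opprD addrA addrAC subrK].
by rewrite hadd // ?IH //; split.
Qed.

Lemma effZ a r : effect K u a -> 0 <= r <= 1 -> effect K u (r *: a).
Proof.
move=> [Ka ca] /andP[r0 r1]; split; first exact: KZ.
rewrite /cle (_ : u - r *: a = (u - a) + (1 - r) *: a); first apply: KD => //.
  by apply: KZ => //; rewrite subr_ge0.
by rewrite scalerBl scale1r addrA subrK.
Qed.

Lemma small_eq0 (d : R) : (forall n : nat, `|d| <= n.+1%:R^-1) -> d = 0.
Proof.
move=> H; apply/eqP; rewrite -normr_eq0; apply/negPn/negP => hd.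
have dp : 0 < `|d| by rewrite lt_def hd normr_ge0.
set m := Num.truncn (`|d|^-1).
have := truncnS_gt (`|d|^-1); rewrite -/m => hm.
have := H m; rewrite -[_^-1]mul1r ler_pdivlMr ?ltr0n // => H1.
move: hm; rewrite -[_^-1]mulr1 ltr_pdivrMl // => H2.
by have := lt_le_trans H2 H1; rewrite ltxx.
Qed.

Lemma state_scale (s : V -> R) a r : is_state K u s -> effect K u a ->
  0 <= r <= 1 -> s (r *: a) = r * s a.
Proof.
move=> hs ha hr.
have [h01 h1 hadd] := hs.
pose f r := s (r *: a).
have fadd : forall r t, 0 <= r -> 0 <= t -> r + t <= 1 -> f (r + t) = f r + f t.
  move=> r1 t r10 t0 rt1.
  rewrite /f scalerDl hadd //; try apply: effZ => //; try (apply/andP; split => //; lra).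
  by rewrite -scalerDl; case: (effZ ha (_ : 0 <= r1 + t <= 1)) => //; apply/andP; split => //; lra.
have f01 : forall r, 0 <= r <= 1 -> 0 <= f r <= 1.
  by move=> r1 hr1; apply: h01; apply: effZ.
have fmono : forall r t, 0 <= r -> r <= t -> t <= 1 -> f r <= f t.
  move=> r1 t r10 rt t1.
  have -> : t = r1 + (t - r1) by rewrite addrC subrK.
  have h : 0 <= t - r1 <= 1 by apply/andP; split; lra.
  rewrite fadd //; try lra.
  have /andP[H _] := f01 (t - r1) h.
  by rewrite lerDl.
have f0 : f 0 = 0 by rewrite /f scale0r (state0 hs).
have f1 : f 1 = s a by rewrite /f scale1r.
have fnat : forall n : nat, forall k : nat, (k <= n.+1)%N ->
    f (k%:R / n.+1%:R) = k%:R * f (n.+1%:R^-1).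
  move=> n; elim => [|k IH] hk; first by rewrite mul0r f0 mul0r.
  have Np : 0 < n.+1%:R :> R by rewrite ltr0n.
  have kn : k%:R <= n.+1%:R :> R by rewrite ler_nat; apply: ltnW.
  have e : k.+1%:R / n.+1%:R = k%:R / n.+1%:R + n.+1%:R^-1 :> R
    by rewrite -[k.+1%:R]natr1 mulrDl mul1r.
  rewrite e fadd.
  - by rewrite IH ?(ltnW hk) // -[k.+1%:R]natr1 mulrDl mul1r.
  - by rewrite divr_ge0 ?ler0n ?ltW.
  - by rewrite invr_ge0 ltW.
  - by rewrite -e ler_pdivrMr // mul1r ler_nat.
have f1n : forall n : nat, f (n.+1%:R^-1) = s a / n.+1%:R.
  move=> n; have := fnat n n.+1 (leqnn _).
  rewrite divff ?pnatr_eq0 // f1 => ->.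
  by rewrite mulrC mulKf // pnatr_eq0.
have low : forall r, 0 <= r <= 1 -> forall n : nat, r * s a - n.+1%:R^-1 <= f r.
  move=> r1 /andP[r10 r11] n.
  have Np : 0 < n.+1%:R :> R by rewrite ltr0n.
  set k := Num.truncn (r1 * n.+1%:R).
  have /andP[hk1 hk2] := truncn_itv (mulr_ge0 r10 (ltW Np)).
  rewrite -/k in hk1 hk2.
  have kn : (k <= n.+1)%N.
    by rewrite -(ler_nat R); apply: (le_trans hk1); rewrite ler_piMl // ltW.
  have kr : k%:R / n.+1%:R <= r1 by rewrite ler_pdivrMr.
  apply: (le_trans _ (fmono _ _ _ kr r11)); last by rewrite divr_ge0 ?ler0n ?ltW.
  rewrite fnat // f1n.
  have sa01 := h01 a ha; move/andP: sa01 => [sa0 sa1].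
  have : r1 - n.+1%:R^-1 <= k%:R / n.+1%:R.
    rewrite ler_pdivlMr // mulrBl mulVf ?gt_eqF // lerBlDr.
    by move: hk2; rewrite -[k.+1%:R]natr1 => /ltW.
  move=> hkr.
  have i0 : 0 <= n.+1%:R^-1 :> R by rewrite invr_ge0 ltW.
  have : (r1 - n.+1%:R^-1) * s a <= k%:R / n.+1%:R * s a by rewrite ler_wpM2r.
  rewrite mulrBl => H1.
  have -> : k%:R * (s a / n.+1%:R) = k%:R / n.+1%:R * s a by rewrite mulrA mulrAC.
  apply: le_trans H1.
  by rewrite lerD2l lerN2 -[leRHS]mulr1 ler_wpM2l.
apply/eqP; rewrite -subr_eq0; apply/eqP; apply: small_eq0 => n.
have hr' : 0 <= 1 - r <= 1 by move/andP: hr => [? ?]; apply/andP; split; lra.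
have L1 := low r hr n.
have L2 := low (1 - r) hr' n.
have E : f 1 = f r + f (1 - r).
  rewrite -fadd ?subrKC //; move/andP: hr => [? ?]; first by [].
  by rewrite subr_ge0.
rewrite f1 in E; rewrite mulrBl mul1r in L2.
move: L1 L2 E; rewrite /f.
set x := r * s a; set y := s (r *: a); set z := s ((1 - r) *: a).
set w := s a; set N := n.+1%:R^-1 => L1 L2 E.
rewrite ler_norml; apply/andP; split; lra.
Qed.
Lemma state_ext (f g : V -> R) : (forall b, f b = g b) -> is_state K u f -> is_state K u g.
Proof.
move=> e [h1 h2 h3]; split.
- by move=> a ha; rewrite -(e a); apply: h1.
- by rewrite -(e u).
- by move=> a b ha hb hab; rewrite -(e (a + b)) -(e a) -(e b); apply: h3.
Qed.

Lemma conv_state (I : finType) (w : I -> R) (s : I -> V -> R) :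
  (forall i, 0 <= w i) -> \sum_i w i = 1 -> (forall i, is_state K u (s i)) ->
  is_state K u (fun b => \sum_i w i * s i b).
Proof.
move=> w0 w1 hs; split.
- move=> a ha; apply/andP; split.
    by apply: sumr_ge0 => i _; case: (hs i) => h _ _; have /andP[? ?] := h a ha;
       apply: mulr_ge0.
  rewrite -w1; apply: ler_sum => i _; case: (hs i) => h _ _.
  have /andP[? ?] := h a ha; rewrite -[leRHS]mulr1; exact: ler_wpM2l.
- by rewrite -w1; apply: eq_bigr => i _; case: (hs i) => _ -> _; rewrite mulr1.
- move=> a b ha hb hab; rewrite -big_split /=; apply: eq_bigr => i _.
  by case: (hs i) => _ _ ->; rewrite // mulrDr.
Qed.

Lemma comb_substate (I : finType) (w : I -> R) (s : I -> V -> R) (s0 : V -> R) :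
  (forall i, 0 <= w i) -> \sum_i w i <= 1 -> (forall i, is_state K u (s i)) ->
  is_state K u s0 ->
  is_substate K u (fun b => \sum_i w i * s i b).
Proof.
move=> w0 w1 hs hs0.
have c0 : 0 <= \sum_i w i by apply: sumr_ge0.
have [ce|cne] := eqVneq (\sum_i w i) 0.
  exists 0, s0; split => //; first by rewrite lexx ler01.
  move=> a _; rewrite mul0r big1 // => i _.
  by move/psumr_eq0P: ce => ->; rewrite ?mul0r.
exists (\sum_i w i), (fun b => \sum_i (w i / \sum_i w i) * s i b); split => //.
- by rewrite c0.
- apply: conv_state => //.
  + by move=> i; rewrite divr_ge0.
  + by rewrite -mulr_suml divff.
- move=> a _ /=; rewrite mulr_sumr; apply: eq_bigr => i _.
  by rewrite mulrA mulrCA divff // mulr1.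
Qed.

Lemma state_substate (s : V -> R) : is_state K u s -> is_substate K u s.
Proof.
move=> hs; exists 1, s; split => //; first by rewrite ler01 lexx.
by move=> a _; rewrite mul1r.
Qed.
End Help.

Theorem theorem4p1 (R : realType) (V1 V2 : lmodType R)
  (K1 : V1 -> Prop) (u1 : V1) (K2 : V2 -> Prop) (u2 : V2)
  (hK1 : is_pos_cone K1) (hu1K : K1 u1) (hu1 : u1 <> 0)
  (hK2 : is_pos_cone K2) (hu2K : K2 u2) (hu2 : u2 <> 0)
  (hod1 : order_determining K1 u1) (hod2 : order_determining K2 u2)
  (Omega : finType) (n : nat) (hn : (1 <= n)%N)
  (A : 'I_n -> Omega -> V1) (beta : 'I_n -> Omega -> V2 -> R)
  (lam : 'I_n -> R)
  (hA : forall i, is_observable K1 u1 (A i))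
  (hbeta : forall i x, is_state K2 u2 (beta i x))
  (hlam : forall i, 0 <= lam i <= 1) (hlam1 : \sum_i lam i = 1) :
  let I := fun (x : Omega) (al : V1 -> R) (b : V2) =>
             \sum_i lam i * al (A i x) * beta i x b in
  [/\ is_instrument K1 u1 K2 u2 I,
      (forall al, is_state K1 u1 al ->
         let ali := fun i b => \sum_(x : Omega) al (A i x) * beta i x b in
         [/\ forall i, is_state K2 u2 (ali i),
             forall b, \sum_(x : Omega) I x al b = \sum_i lam i * ali i b &
             is_state K2 u2 (fun b => \sum_(x : Omega) I x al b)]) &
      (forall x, effect K1 u1 (\sum_i lam i *: A i x) /\
         forall al, is_state K1 u1 al ->
           al (\sum_i lam i *: A i x) = I x al u2)].
Proof.
move=> I.
have i0 : 'I_n := Ordinal hn.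
have K1_0 := K0 hK1 hu1K.
have K2_0 := K0 hK2 hu2K.
have al01 : forall al i x, is_state K1 u1 al -> 0 <= al (A i x) <= 1.
  by move=> al i x [h _ _]; apply: h; case: (hA i) => h _; apply: h.
have alsum : forall al i, is_state K1 u1 al -> \sum_x al (A i x) = 1.
  move=> al i hal; case: (hA i) => hAe hAs.
  rewrite -(state_sum hK1 hu1K hal); last 2 first.
  - by move=> x; case: (hAe x).
  - by rewrite hAs /cle subrr.
  by rewrite hAs; case: hal.
have ali_state : forall al, is_state K1 u1 al -> forall i,
    is_state K2 u2 (fun b => \sum_(x : Omega) al (A i x) * beta i x b).
  move=> al hal i; apply: conv_state => //.
  - by move=> x; case/andP: (al01 al i x hal).
  - exact: alsum.
have sumeq : forall al b, \sum_(x : Omega) I x al b =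
    \sum_i lam i * (\sum_(x : Omega) al (A i x) * beta i x b).
  move=> al b; rewrite /I exchange_big /=; apply: eq_bigr => i _.
  by rewrite mulr_sumr; apply: eq_bigr => x _; rewrite mulrA.
have ch_state : forall al, is_state K1 u1 al ->
    is_state K2 u2 (fun b => \sum_(x : Omega) I x al b).
  move=> al hal.
  apply: (@state_ext _ _ _ _ (fun b => \sum_i lam i * (\sum_(x : Omega) al (A i x) * beta i x b))).
  - by move=> b; rewrite sumeq.
  - apply: conv_state => //; [by move=> i; case/andP: (hlam i) | exact: ali_state].
have Iaff : forall x (m : nat) (w : 'I_m -> R) (s : 'I_m -> V1 -> R) b,
    I x (fun a => \sum_j w j * s j a) b = \sum_j w j * I x (s j) b.
  move=> x m w s b; rewrite /I.
  under eq_bigr => i _ do rewrite mulr_sumr mulr_suml.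
  rewrite exchange_big /=; apply: eq_bigr => j _.
  rewrite mulr_sumr; apply: eq_bigr => i _; ring.
have Iop : forall x, is_operation K1 u1 K2 u2 (I x).
  move=> x; split.
  - move=> al hal; apply: (@comb_substate _ _ _ _ _ (fun i => lam i * al (A i x)) (fun i => beta i x) (beta i0 x)) => //.
    + by move=> i; case/andP: (hlam i) => ? _; case/andP: (al01 al i x hal) => ? _; apply: mulr_ge0.
    + rewrite -hlam1; apply: ler_sum => i _; case/andP: (hlam i) => ? _.
      by case/andP: (al01 al i x hal) => _ ?; rewrite -[leRHS]mulr1 ler_wpM2l.
  - move=> al al' hal hal' e b _; rewrite /I; apply: eq_bigr => i _.
    by rewrite e //; case: (hA i) => h _; apply: h.
  - by move=> m w s _ _ _ b _; apply: Iaff.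
split.
- split => //; split; first split.
  + by move=> al hal; apply: state_substate; apply: ch_state.
  + move=> al al' hal hal' e b hb; apply: eq_bigr => x _.
    by case: (Iop x) => _ H _; apply: H.
  + move=> m w s _ _ _ b _ /=.
    under eq_bigr => x _ do rewrite Iaff.
    rewrite exchange_big /=; apply: eq_bigr => j _; by rewrite mulr_sumr.
  + exact: ch_state.
- move=> al hal /=; split => //; [exact: ali_state | exact: ch_state].
move=> x.
have Ke : forall i, K1 (lam i *: A i x).
  move=> i; apply: (KZ hK1); first by case/andP: (hlam i).
  by case: (hA i) => h _; case: (h x).
have cl : cle K1 (\sum_i lam i *: A i x) u1.
  rewrite /cle.
  have -> : u1 = \sum_i lam i *: u1 by rewrite -scaler_suml hlam1 scale1r.
  rewrite -sumrB; apply: (Ksum hK1 hu1K) => i _; rewrite -scalerBr.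
  apply: (KZ hK1); first by case/andP: (hlam i).
  by case: (hA i) => h _; case: (h x).
split; first by split => //; apply: (Ksum hK1 hu1K).
move=> al hal.
rewrite (state_sum hK1 hu1K hal Ke cl) /I; apply: eq_bigr => i _.
rewrite (state_scale hK1 hu1K hal) //.
- by case: (hbeta i x) => _ -> _; rewrite mulr1.
- by case: (hA i) => h _; apply: h.
Qed.
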